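(* Let $G$ be a connected edge-stable equimatchable graph that has a cut vertex. Then $G$ is bipartite.
   Context: All graphs are finite and simple. A graph is equimatchable if all its maximal matchings have the same cardinality. An equimatchable graph $G$ is edge-stable if $G\setminus e$ (remove the edge $e$, keep all vertices) is equimatchable for every $e\in E(G)$. A cut vertex of a connected graph is a vertex whose removal disconnects the graph. *)

(* Defs.v *)
From mathcomp Require Import all_boot.
Set Implicit Arguments. Unset Strict Implicit. Unset Printing Implicit Defensive.

Definition simple_graph (V : finType) (E : {set {set V}}) : Prop :=
  forall e, e \in E -> #|e| = 2.

Definition adj_in (V : finType) (E : {set {set V}}) (S : {set V}) : rel V :=
  fun x y => [&& x \in S, y \in S, x != y & [set x; y] \in E].

Definition connected_in (V : finType) (E : {set {set V}}) (S : {set V}) : Prop :=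
  forall x y, x \in S -> y \in S -> connect (adj_in E S) x y.

Definition connected_graph (V : finType) (E : {set {set V}}) : Prop :=
  connected_in E [set: V].

Definition cut_vertex (V : finType) (E : {set {set V}}) (v : V) : Prop :=
  ~ connected_in E ([set: V] :\ v).

Definition matching (V : finType) (E M : {set {set V}}) : Prop :=
  M \subset E /\ (forall e f : {set V}, e \in M -> f \in M -> e != f -> [disjoint e & f]).

Definition maximal_matching (V : finType) (E M : {set {set V}}) : Prop :=
  matching E M /\
  forall e, e \in E -> e \notin M -> ~ matching E (e |: M).

Definition equimatchable (V : finType) (E : {set {set V}}) : Prop :=
  forall M1 M2, maximal_matching E M1 -> maximal_matching E M2 -> #|M1| = #|M2|.

Definition edge_stable (V : finType) (E : {set {set V}}) : Prop :=
  equimatchable E /\ forall e, e \in E -> equimatchable (E :\ e).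

Definition bipartite (V : finType) (E : {set {set V}}) : Prop :=
  exists A : {set V}, forall e, e \in E -> #|e :&: A| = 1.

(* Main.v *)
Require Import Defs.
From mathcomp Require Import all_boot zify.
From Stdlib Require Import Classical ClassicalDescription.
Set Implicit Arguments. Unset Strict Implicit. Unset Printing Implicit Defensive.

Lemma disjP (V : finType) (A B : {set V}) :
  [disjoint A & B] <-> (forall z, z \in A -> z \in B -> False).
Proof.
rewrite -setI_eq0; split => [/eqP H z zA zB | H].
  have: z \in A :&: B by rewrite inE zA zB.
  by rewrite H inE.
apply/eqP/setP => z; rewrite inE in_set0; apply/negbTE/negP => /andP[]; exact: H.
Qed.

Definition cover (V : finType) (M : {set {set V}}) : {set V} := \bigcup_(e in M) e.

Lemma coverP (V : finType) (M : {set {set V}}) z :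
  z \in cover M <-> exists2 e, e \in M & z \in e.
Proof. by split => [/bigcupP | H]; [|apply/bigcupP]. Qed.

Lemma cover_sub (V : finType) (M : {set {set V}}) e z : e \in M -> z \in e -> z \in cover M.
Proof. by move=> eM ze; apply/coverP; exists e. Qed.

Lemma cover_add (V : finType) (M : {set {set V}}) (f : {set V}) z :
  z \in cover (f |: M) = (z \in f) || (z \in cover M).
Proof.
apply/idP/idP.
  move/coverP => [e /setU1P [-> ->//|eM ze]].
  by rewrite (cover_sub eM ze) orbT.
case/orP => [zf|/coverP [e eM ze]].
  by apply: (cover_sub (setU11 f M)).
by apply: (cover_sub _ ze); rewrite inE eM orbT.
Qed.

Lemma cover_U (V : finType) (M N : {set {set V}}) z :
  z \in cover (M :|: N) = (z \in cover M) || (z \in cover N).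
Proof.
apply/idP/idP.
  move/coverP => [e /setUP [eM|eN] ze].
    by rewrite (cover_sub eM ze).
  by rewrite (cover_sub eN ze) orbT.
case/orP => /coverP [e eM ze]; apply: (cover_sub _ ze); by rewrite inE eM ?orbT.
Qed.

Lemma cover_mono (V : finType) (M N : {set {set V}}) z :
  M \subset N -> z \in cover M -> z \in cover N.
Proof. move=> /subsetP MN /coverP [e eM ze]; exact: (cover_sub (MN _ eM) ze). Qed.

Lemma match_uniq (V : finType) (E M : {set {set V}}) e f z :
  matching E M -> e \in M -> f \in M -> z \in e -> z \in f -> e = f.
Proof.
move=> [_ H] eM fM ze zf; case: (eqVneq e f) => // ne.
by move/disjP: (H e f eM fM ne) => /(_ z ze zf).
Qed.

Lemma matching_sub (V : finType) (E M N : {set {set V}}) :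
  matching E M -> N \subset M -> matching E N.
Proof.
move=> [ME H] /subsetP NM; split.
  by apply/subsetP => e /NM; apply: (subsetP ME).
by move=> e f /NM eM /NM fM; apply: H.
Qed.

Lemma matching_add (V : finType) (E M : {set {set V}}) (f : {set V}) :
  matching E M -> f \in E -> (forall z, z \in f -> z \notin cover M) ->
  matching E (f |: M).
Proof.
move=> [ME H] fE fd; split.
  by apply/subsetP => e /setU1P [->//|/(subsetP ME)].
have aux: forall g, g \in M -> [disjoint f & g].
  by move=> g gM; apply/disjP => z zf zg; move: (fd z zf); rewrite (cover_sub gM zg).
move=> e g /setU1P [->|eM] /setU1P [->|gM] ne.
- by rewrite eqxx in ne.
- exact: aux.
- by rewrite disjoint_sym; apply: aux.
- exact: H.
Qed.

Lemma card_add (V : finType) (M : {set {set V}}) (f : {set V}) z :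
  z \in f -> (forall z, z \in f -> z \notin cover M) -> #|f |: M| = #|M|.+1.
Proof.
move=> zf fd; rewrite cardsU1.
suff ->: f \notin M by [].
by apply/negP => fM; move: (fd z zf); rewrite (cover_sub fM zf).
Qed.

Lemma matching1 (V : finType) (E : {set {set V}}) f : f \in E -> matching E [set f].
Proof.
move=> fE; split; first by rewrite sub1set.
by move=> e g /set1P -> /set1P ->; rewrite eqxx.
Qed.

Definition simple := simple_graph.

Lemma edge2 (V : finType) (E : {set {set V}}) e : simple_graph E -> e \in E ->
  exists p q, p != q /\ e = [set p; q].
Proof. by move=> sE eE; apply/cards2P; rewrite sE. Qed.

Lemma edge_other (V : finType) (E : {set {set V}}) e z : simple_graph E -> e \in E -> z \in e ->
  exists2 z', z' != z & e = [set z; z'].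
Proof.
move=> sE eE ze; have [p [q [pq ee]]] := edge2 sE eE; subst e.
case/set2P: ze => ->; first by exists q; rewrite // eq_sym.
by exists p => //; rewrite setUC.
Qed.

Lemma edge_neq (V : finType) (E : {set {set V}}) p q : simple_graph E -> [set p; q] \in E -> p != q.
Proof. by move=> sE /sE; rewrite cards2; case: (p != q). Qed.

Lemma maxP (V : finType) (E M : {set {set V}}) : simple_graph E ->
  maximal_matching E M <->
  matching E M /\ (forall f, f \in E -> exists2 z, z \in f & z \in cover M).
Proof.
move=> sE; split.
  move=> [mM H]; split => // f fE.
  apply: NNPP => nf.
  have fd : forall z, z \in f -> z \notin cover M.
    by move=> z zf; apply/negP => zc; apply: nf; exists z.
  have [p [q [_ ef]]] := edge2 sE fE.
  have pf : p \in f by rewrite ef set21.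
  have fM : f \notin M by apply/negP => fM; move: (fd p pf); rewrite (cover_sub fM pf).
  by apply: (H f fE fM); apply: matching_add.
move=> [mM H]; split => // e eE eM me.
have [z ze /coverP [g gM zg]] := H e eE.
have gM' : g \in e |: M by rewrite inE gM orbT.
have eg : e = g := match_uniq me (setU11 e M) gM' ze zg.
by move: eM; rewrite eg gM.
Qed.

Lemma max_pair (V : finType) (E M : {set {set V}}) a b : simple_graph E ->
  maximal_matching E M -> [set a; b] \in E -> a \notin cover M -> b \notin cover M -> False.
Proof.
move=> sE /(maxP _ sE) [_ H] abE aM bM.
have [z /set2P [->|->] zc] := H _ abE; [by rewrite zc in aM | by rewrite zc in bM].
Qed.

Lemma extend_max (V : finType) (E N : {set {set V}}) :
  matching E N -> exists2 N' : {set {set V}}, N \subset N' & maximal_matching E N'.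
Proof.
move=> mN.
have: #|E| - #|N| <= #|E| - #|N| by [].
move: {-1}(#|E| - #|N|) => n.
elim: n N mN => [|n IH] N mN hn.
  exists N => //; split => // e eE eN me.
  have: #|e |: N| <= #|E| by apply: subset_leq_card; case: me.
  by rewrite cardsU1 eN; lia.
case: (classic (maximal_matching E N)) => [mx|nmx]; first by exists N.
have [e [eE [eN me]]] : exists e, e \in E /\ e \notin N /\ matching E (e |: N).
  apply: NNPP => H; apply: nmx; split => // e eE eN me; apply: H; exists e; split => //.
have hn' : #|E| - #|e |: N| <= n.
  have: #|e |: N| <= #|E| by apply: subset_leq_card; case: me.
  by rewrite cardsU1 eN in hn *; lia.
have [N' sN' mN'] := IH _ me hn'.
exists N' => //; apply: subset_trans sN'; exact: subsetU1.
Qed.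
Lemma size_bound (V : finType) (E M0 N : {set {set V}}) :
  equimatchable E -> maximal_matching E M0 -> matching E N -> #|N| <= #|M0|.
Proof.
move=> eq M0m mN; have [N' sN' mN'] := extend_max mN.
by rewrite (eq _ _ M0m mN'); apply: subset_leq_card.
Qed.

Lemma size_max (V : finType) (E M0 N : {set {set V}}) :
  equimatchable E -> maximal_matching E M0 -> matching E N -> #|N| = #|M0| ->
  maximal_matching E N.
Proof.
move=> eq M0m mN hN; have [N' sN' mN'] := extend_max mN.
suff -> : N = N' by [].
apply/eqP; rewrite eqEcard sN' /=.
by rewrite hN (eq _ _ M0m mN').
Qed.

Lemma not_max_ex (V : finType) (E N : {set {set V}}) : simple_graph E ->
  matching E N -> ~ maximal_matching E N ->
  exists2 f, f \in E & forall z, z \in f -> z \notin cover N.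
Proof.
move=> sE mN nm; apply: NNPP => H; apply: nm; apply/(maxP _ sE); split => // f fE.
apply: NNPP => H2; apply: H; exists f => // z zf; apply/negP => zc; apply: H2; by exists z.
Qed.

Lemma cover_del (V : finType) (E M : {set {set V}}) e z :
  matching E M -> e \in M -> z \in cover (M :\ e) = (z \in cover M) && (z \notin e).
Proof.
move=> mM eM; apply/idP/idP.
  move/coverP => [g /setD1P [ge gM] zg]; rewrite (cover_sub gM zg) /=.
  apply/negP => ze; move: ge; by rewrite (match_uniq mM gM eM zg ze) eqxx.
move/andP => [/coverP [g gM zg] ze]; apply: (cover_sub _ zg).
apply/setD1P; split => //; apply/eqP => ge; by move: ze; rewrite -ge zg.
Qed.

Definition covered_always (V : finType) (E : {set {set V}}) z :=
  forall M, maximal_matching E M -> z \in cover M.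

Lemma L1 (V : finType) (E M : {set {set V}}) t s u :
  simple_graph E -> equimatchable E -> maximal_matching E M -> covered_always E t ->
  [set t; s] \in M -> u \notin cover M -> [set s; u] \in E -> False.
Proof.
move=> sE eq Mm At tsM uM suE.
have mM : matching E M by case: Mm.
have tsE : [set t; s] \in E by case: mM => /subsetP H _; apply: H.
have ts := edge_neq sE tsE.
set M' := [set s; u] |: (M :\ [set t; s]).
have fd : forall z, z \in [set s; u] -> z \notin cover (M :\ [set t; s]).
  move=> z /set2P [->|->]; rewrite (cover_del _ mM tsM) negb_and negbK.
    by rewrite set22 orbT.
  by rewrite uM.
have mM' : matching E M'.
  apply: matching_add => //; apply: (matching_sub mM); exact: subD1set.
have cM' : #|M'| = #|M|.
  rewrite /M' (card_add (z:=s)) ?set21 //.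
  by rewrite (cardsD1 [set t; s] M) tsM.
have Mm' := size_max eq Mm mM' cM'.
have := At _ Mm'; rewrite /M' cover_add in_set2 (cover_del _ mM tsM) set21 /= andbF orbF.
case/orP => /eqP ut.
  by rewrite ut eqxx in ts.
by move: uM; rewrite -ut (cover_sub tsM (set21 t s)).
Qed.

Lemma star (V : finType) (E M : {set {set V}}) e :
  simple_graph E -> edge_stable E ->
  (forall e, e \in E -> exists g, [/\ g \in E, g != e & exists2 z, z \in g & z \in e]) ->
  maximal_matching E M -> e \in M ->
  exists z u, [/\ z \in e, u \notin cover M & [set z; u] \in E].
Proof.
move=> sE [eq eqs] adjH Mm eM.
have mM : matching E M by case: Mm.
have eE : e \in E by case: mM => /subsetP H _; apply: H.
apply: NNPP => H.
have sE' : simple_graph (E :\ e) by move=> f /setD1P [_ /sE].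
have mx1 : maximal_matching (E :\ e) (M :\ e).
  apply/(maxP _ sE'); split.
    split; last by case: mM => _ H2 f g /setD1P [_ fM] /setD1P [_ gM]; apply: H2.
    apply/subsetP => f /setD1P [fe fM]; apply/setD1P; split => //.
    by case: mM => /subsetP H2 _; apply: H2.
  move=> f /setD1P [fe fE].
  apply: NNPP => nf.
  have [_ H2] := iffLR (maxP _ sE) Mm.
  have [z zf zc] := H2 f fE.
  have ze : z \in e.
    apply/negPn/negP => nze; apply: nf; exists z => //.
    by rewrite (cover_del _ mM eM) zc nze.
  have [u uz fzu] := edge_other sE fE zf.
  apply: H; exists z, u; split => //; last by rewrite -fzu.
  apply/negP => uc.
  have ue : u \in e.
    apply/negPn/negP => nue; apply: nf; exists u; first by rewrite fzu set22.
    by rewrite (cover_del _ mM eM) uc nue.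
  move: fe; suff -> : f = e by rewrite eqxx.
  apply/eqP; rewrite eqEcard; apply/andP; split.
    by apply/subsetP => y; rewrite fzu => /set2P [->|->].
  by rewrite (sE _ eE) (sE _ fE).
have [g [gE ge [z zg ze]]] := adjH e eE.
have [M2 sM2 M2m] := extend_max (matching1 gE).
have eM2 : e \notin M2.
  apply/negP => eM2.
  have gM2 : g \in M2 by apply: (subsetP sM2); rewrite inE.
  have mM2 : matching E M2 by case: M2m.
  by move: ge; rewrite (match_uniq mM2 gM2 eM2 zg ze) eqxx.
have mx2 : maximal_matching (E :\ e) M2.
  apply/(maxP _ sE'); split.
    split; last by case: M2m => [[_ H2] _].
    apply/subsetP => f fM2; apply/setD1P; split.
      by apply/eqP => fe; move: eM2; rewrite -fe fM2.
    by case: M2m => [[/subsetP H2 _] _]; apply: H2.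
  move=> f /setD1P [_ fE].
  by have [_ H2] := iffLR (maxP _ sE) M2m; apply: H2.
have := eqs e eE _ _ mx1 mx2.
rewrite (eq _ _ M2m Mm).
by rewrite (cardsD1 e M) eM; lia.
Qed.
Definition adjH (V : finType) (E : {set {set V}}) :=
  forall e, e \in E -> exists g, [/\ g \in E, g != e & exists2 z, z \in g & z \in e].

Lemma noAA (V : finType) (E : {set {set V}}) t s :
  simple_graph E -> edge_stable E -> adjH E ->
  covered_always E t -> covered_always E s -> [set t; s] \in E -> False.
Proof.
move=> sE es aH At As tsE.
have [M sM Mm] := extend_max (matching1 tsE).
have tsM : [set t; s] \in M by apply: (subsetP sM); rewrite inE.
have [z [u [/set2P [->|->] uM zuE]]] := star sE es aH Mm tsM.
  by apply: (L1 sE es.1 Mm As (s:=t)) uM zuE; rewrite setUC.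
exact: (L1 sE es.1 Mm At tsM uM zuE).
Qed.

Lemma LemmaX (V : finType) (E : {set {set V}}) t x y :
  simple_graph E -> edge_stable E -> adjH E ->
  covered_always E t -> [set t; x] \in E -> [set x; y] \in E -> ~ covered_always E y -> False.
Proof.
move=> sE es aH At txE xyE nAy.
have eq := es.1.
have [My Mym yM] : exists2 My, maximal_matching E My & y \notin cover My.
  apply: NNPP => H; apply: nAy => M Mm; apply/negPn/negP => yM; apply: H; by exists M.
have mMy : matching E My by case: Mym.
have MyE : forall e, e \in My -> e \in E by case: mMy => /subsetP.
have xM : x \in cover My.
  by apply/negPn/negP => xM; apply: (max_pair sE Mym xyE).
have tM : t \in cover My := At _ Mym.
have [ex exM xex] := iffLR (coverP _ _) xM.
have [x' x'x exE] := edge_other sE (MyE _ exM) xex.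
have [et etM tet] := iffLR (coverP _ _) tM.
have [t' t't etE] := edge_other sE (MyE _ etM) tet.
have tx := edge_neq sE txE.
case: (eqVneq ex et) => [exet | nexet].
  have tex : t \in ex by rewrite exet.
  rewrite exE in tex; case/set2P: tex => tx'.
    by rewrite tx' eqxx in tx.
  apply: (L1 sE eq Mym At (s:=x)) yM xyE.
  by rewrite setUC tx' -exE.
have x'M : x' \in cover My by apply: (cover_sub exM); rewrite exE set22.
have t'M : t' \in cover My by apply: (cover_sub etM); rewrite etE set22.
have H1 : forall u, u \notin cover My -> [set t'; u] \in E -> False.
  move=> u uM tuE; apply: (L1 sE eq Mym At (s:=t')) uM tuE; by rewrite -etE.
have nin : forall z, z \in ex -> z \in et -> False.
  by move=> z zex zet; move: nexet; rewrite (match_uniq mMy exM etM zex zet) eqxx.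
set R := My :\ ex :\ et.
have mR1 : matching E (My :\ ex) by apply: (matching_sub mMy); exact: subD1set.
have etR1 : et \in My :\ ex by apply/setD1P; split => //; rewrite eq_sym.
have cR : forall z, z \in cover R = [&& z \in cover My, z \notin ex & z \notin et].
  by move=> z; rewrite /R (cover_del _ mR1 etR1) (cover_del _ mMy exM) andbA.
have mR : matching E R by apply: (matching_sub mR1); exact: subD1set.
have fdtx : forall z, z \in [set t; x] -> z \notin cover R.
  move=> z /set2P [->|->]; rewrite cR; [by rewrite tet !andbF | by rewrite xex andbF].
set M'' := [set t; x] |: R.
have mM'' : matching E M'' by apply: matching_add.
have cM'' : forall z, z \in cover M'' = (z \in [set t; x]) || [&& z \in cover My, z \notin ex & z \notin et].
  by move=> z; rewrite /M'' cover_add cR.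
have sM'' : #|M''| = (#|My|).-1.
  rewrite /M'' (card_add (z:=t)) ?set21 //.
  by rewrite (cardsD1 ex My) exM (cardsD1 et (My :\ ex)) etR1 -/R.
have outside : forall z, z \notin cover M'' -> z \in cover My -> z = x' \/ z = t'.
  move=> z; rewrite cM'' negb_or in_set2 => /andP [/norP [zt zx]] H zM.
  move: H; rewrite zM /= negb_and !negbK => /orP [].
    by rewrite exE => /set2P [zx'|]; [move: zx; rewrite zx' eqxx | left].
  by rewrite etE => /set2P [zt'|]; [move: zt; rewrite zt' eqxx | right].
have My0 : 0 < #|My| by rewrite (cardsD1 ex My) exM.
have yt : y != t by apply/eqP => yt; move: yM; rewrite yt tM.
have yx : y != x by apply/eqP => yx; move: yM; rewrite yx xM.
have txM : forall f, [set t; x] \in f |: M''.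
  by move=> f; rewrite inE /M'' setU11 orbT.
have KEY : forall f, f \in E -> (forall z, z \in f -> z \notin cover M'') -> y \in f.
  move=> f fE fd; apply/negPn/negP => yf.
  have [p [q [_ fpq]]] := edge2 sE fE.
  have mN : matching E (f |: M'') by apply: matching_add.
  have cN : #|f |: M''| = #|My|.
    rewrite (card_add (z:=p)) //; last by rewrite fpq set21.
    by rewrite sM'' prednK.
  have Nm := size_max eq Mym mN cN.
  apply: (L1 sE eq Nm At (txM f)) _ xyE.
  rewrite cover_add negb_or yf cM'' negb_or in_set2 negb_or yt yx /=.
  by rewrite (negbTE yM).
have nmx : ~ maximal_matching E M''.
  move=> M''m; have := eq _ _ Mym M''m; rewrite sM''.
  move=> h; move: My0; by rewrite -ltn_predL -{1}h ltnn.
have [f fE fd] := not_max_ex sE mM'' nmx.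
have yf := KEY f fE fd.
have [q qy fE'] := edge_other sE fE yf.
have qM'' : q \notin cover M'' by apply: fd; rewrite fE' set22.
case qM: (q \in cover My); last first.
  by apply: (max_pair sE Mym (a:=y) (b:=q)); rewrite -?fE' ?qM.
case: (outside q qM'' qM) => qq; last first.
  by apply: (H1 y yM); rewrite -qq setUC -fE'.
have mN : matching E (f |: M'') by apply: matching_add.
have cN : #|f |: M''| = #|My|.
  by rewrite (card_add (z:=y)) // sM'' prednK.
have Nm := size_max eq Mym mN cN.
have [z [u [zf uN zuE]]] := star sE es aH Nm (setU11 f M'').
move: uN; rewrite cover_add negb_or => /andP [uf uM''].
move: zf; rewrite fE' => /set2P [zy|zq]; subst z.
  case uM: (u \in cover My); last first.
    by apply: (max_pair sE Mym zuE); rewrite ?uM.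
  case: (outside u uM'' uM) => uu.
    by move: uf; rewrite fE' uu -qq set22.
  by apply: (H1 y yM); rewrite -uu setUC.
have yu : y \notin [set q; u].
  rewrite in_set2 negb_or eq_sym qy /=.
  by apply/eqP => yu; move: uf; rewrite -yu fE' set21.
move: yu; rewrite (KEY _ zuE) //.
move=> z /set2P [->|->] //.
Qed.
Lemma path_prop (T : finType) (r : rel T) (Q : T -> Prop) a b :
  connect r a b -> Q a -> (forall x y, Q x -> r x y -> Q y) -> Q b.
Proof.
move/connectP => [s pth ->] Qa step.
elim: s a pth Qa => [|z s IH] a //= /andP [raz pth] Qa.
by apply: IH pth _; apply: step Qa raz.
Qed.

Lemma exit_lemma (T : finType) (r : rel T) (P : pred T) a b :
  connect r a b -> P a -> ~~ P b -> exists p q, [/\ P p, ~~ P q & r p q].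
Proof.
move/connectP => [s pth ->].
elim: s a pth => [|z s IH] a /=; first by move=> _ ->.
move=> /andP [raz pth] Pa nPl.
case Pz: (P z); first exact: IH pth Pz nPl.
by exists a, z; rewrite Pz.
Qed.

Definition pb (P : Prop) : bool := if excluded_middle_informative P then true else false.
Lemma pbE (P : Prop) : pb P <-> P.
Proof. by rewrite /pb; case: excluded_middle_informative. Qed.

Lemma bip_from_A (V : finType) (E : {set {set V}}) t0 :
  simple_graph E -> edge_stable E -> adjH E -> connected_graph E ->
  covered_always E t0 -> bipartite E.
Proof.
move=> sE es aH conn At0.
pose Q z := covered_always E z \/ exists2 t, covered_always E t & [set t; z] \in E.
have step : forall x y, Q x -> adj_in E setT x y -> Q y.
  move=> x y Qx /and4P [_ _ _ xyE].
  case: (classic (covered_always E y)) => Ay; first by left.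
  case: Qx => [Ax | [t At txE]]; first by right; exists x.
  by case: (LemmaX sE es aH At txE xyE Ay).
have allQ : forall z, Q z.
  move=> z; apply: (path_prop (conn t0 z (in_setT _) (in_setT _))) step.
  by left.
exists [set z | pb (covered_always E z)] => e eE.
have [p [q [pq ee]]] := edge2 sE eE; subst e.
have inA : forall z, (z \in [set z | pb (covered_always E z)]) <-> covered_always E z.
  by move=> z; rewrite inE; apply: pbE.
case: (classic (covered_always E p)) => Ap; case: (classic (covered_always E q)) => Aq.
- by case: (noAA sE es aH Ap Aq eE).
- suff -> : [set p; q] :&: [set z | pb (covered_always E z)] = [set p] by rewrite cards1.
  apply/setP => z; rewrite !inE.
  case: (eqVneq z p) => [->|zp] /=; first by apply/pbE.
  case: (eqVneq z q) => [zq|//] /=; subst z; apply/negbTE/negP => /pbE //.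
- suff -> : [set p; q] :&: [set z | pb (covered_always E z)] = [set q] by rewrite cards1.
  apply/setP => z; rewrite !inE.
  case: (eqVneq z q) => [->|zq] /=; first by rewrite orbT; apply/pbE.
  case: (eqVneq z p) => [zp|//] /=; subst z; apply/negbTE/negP => /pbE //.
- case: (allQ p) => [//|[t At tpE]].
  by case: (LemmaX sE es aH At tpE eE Aq).
Qed.
Definition sep (V : finType) (E : {set {set V}}) v (S1 S2 : {set V}) : Prop :=
  [/\ v \notin S1, v \notin S2, (forall z, z \in S1 -> z \in S2 -> False),
      (forall z, z != v -> (z \in S1) || (z \in S2)) &
      (forall p q, p \in S1 -> q \in S2 -> [set p; q] \notin E)].

Lemma sep_sym (V : finType) (E : {set {set V}}) v S1 S2 : sep E v S1 S2 -> sep E v S2 S1.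
Proof.
move=> [h1 h2 h3 h4 h5]; split => //.
- by move=> z z2 z1; apply: (h3 z).
- by move=> z /h4; rewrite orbC.
- by move=> p q p2 q1; rewrite setUC; apply: h5.
Qed.

Lemma classify (V : finType) (E : {set {set V}}) v S1 S2 e :
  simple_graph E -> sep E v S1 S2 -> e \in E ->
  v \in e \/ e \subset S1 \/ e \subset S2.
Proof.
move=> sE [h1 h2 h3 h4 h5] eE.
have [p [q [pq ee]]] := edge2 sE eE; subst e.
case: (eqVneq p v) => [->|pv]; first by left; rewrite set21.
case: (eqVneq q v) => [->|qv]; first by left; rewrite set22.
right; move: (h4 _ pv) (h4 _ qv) => /orP [p1|p2] /orP [q1|q2].
- by left; apply/subsetP => z /set2P [->|->].
- by move: (h5 _ _ p1 q2); rewrite eE.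
- by move: (h5 _ _ q1 p2); rewrite setUC eE.
- by right; apply/subsetP => z /set2P [->|->].
Qed.

Definition side (V : finType) (M : {set {set V}}) (S : {set V}) := [set e in M | e \subset S].

Lemma side_sub (V : finType) (M : {set {set V}}) S : side M S \subset M.
Proof. by apply/subsetP => e; rewrite inE => /andP []. Qed.

Lemma side_in (V : finType) (M : {set {set V}}) S e : e \in side M S -> e \subset S.
Proof. by rewrite inE => /andP []. Qed.

Lemma cover_side (V : finType) (M : {set {set V}}) S z : z \in cover (side M S) -> z \in S.
Proof. by move/coverP => [e /side_in /subsetP H /H]. Qed.

Lemma set2_eq (V : finType) (v p z : V) : [set v; z] = [set v; p] -> z != v -> z = p.
Proof.
move=> H zv; have: z \in [set v; p] by rewrite -H set22.
by case/set2P => // zv'; rewrite zv' eqxx in zv.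
Qed.

Lemma sideC1 (V : finType) (E M : {set {set V}}) v S1 S2 p u :
  simple_graph E -> sep E v S1 S2 -> matching E M -> [set v; p] \in M ->
  u \in cover M -> u \in S1 -> u \in cover (side M S1) \/ u = p.
Proof.
move=> sE sp mM vpM /coverP [e eM ue] u1.
have eE : e \in E by case: mM => /subsetP H _; apply: H.
have [h1 h2 h3 h4 h5] := sp.
have uv : u != v by apply/eqP => uv; move: h1; rewrite -uv u1.
case: (classify sE sp eE) => [ve|[e1|e2]].
- right; have [u' u'u ee] := edge_other sE eE ue.
  have u'v : u' = v by move: ve; rewrite ee => /set2P [vu|->//]; move: uv; rewrite vu eqxx.
  apply: (set2_eq _ uv); apply: (match_uniq mM _ vpM (z:=v)); rewrite ?set21 //.
  by rewrite setUC -u'v -ee.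
- by left; apply: (cover_sub _ ue); rewrite inE eM e1.
- by case: (h3 u u1); move/subsetP: e2; apply.
Qed.

Lemma notin_side (V : finType) (E M : {set {set V}}) v S1 S2 p :
  simple_graph E -> sep E v S1 S2 -> matching E M -> [set v; p] \in M ->
  p \notin cover (side M S1).
Proof.
move=> sE [h1 _ _ _ _] mM vpM; apply/negP => /coverP [e eS pe].
have eM : e \in M by apply: (subsetP (side_sub M S1)).
have ee := match_uniq mM eM vpM pe (set22 v p).
by move: (side_in eS) => /subsetP /(_ v); rewrite ee set21 (negbTE h1) => /(_ isT).
Qed.

Lemma card_disjU (T : finType) (A B : {set T}) :
  (forall x, x \in A -> x \in B -> False) -> #|A :|: B| = #|A| + #|B|.
Proof.
move=> H; rewrite cardsU.
suff -> : A :&: B = set0 by rewrite cards0 subn0.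
apply/setP => x; rewrite !inE; apply/negbTE/negP => /andP [xA xB]; exact: H x xA xB.
Qed.

Lemma dec_sides (V : finType) (E M : {set {set V}}) v S1 S2 :
  simple_graph E -> sep E v S1 S2 -> matching E M ->
  [set e in M | v \in e] :|: (side M S1 :|: side M S2) = M /\
  #|side M S1 :|: side M S2| = #|side M S1| + #|side M S2|.
Proof.
move=> sE sp mM; have [h1 h2 h3 h4 h5] := sp; split.
  apply/setP => e; rewrite !inE; apply/idP/idP.
    by case/orP => [/andP [] //|/orP [] /andP []].
  move=> eM; rewrite eM /=.
  have eE : e \in E by case: mM => /subsetP H _; apply: H.
  by case: (classify sE sp eE) => [->|[->|->]]; rewrite ?orbT.
apply: card_disjU => e; rewrite !inE => /andP [eM e1] /andP [_ e2].
have eE : e \in E by case: mM => /subsetP H _; apply: H.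
have [p [q [_ ee]]] := edge2 sE eE.
apply: (h3 p); [move/subsetP: e1 | move/subsetP: e2]; apply; by rewrite ee set21.
Qed.

Lemma dec0 (V : finType) (E M : {set {set V}}) v S1 S2 :
  simple_graph E -> sep E v S1 S2 -> matching E M -> v \notin cover M ->
  #|M| = #|side M S1| + #|side M S2|.
Proof.
move=> sE sp mM vM; have [H1 H2] := dec_sides sE sp mM.
rewrite -{1}H1 -H2.
suff -> : [set e in M | v \in e] = set0 by rewrite set0U.
apply/setP => e; rewrite !inE; apply/negbTE/negP => /andP [eM ve].
by move: vM; rewrite (cover_sub eM ve).
Qed.

Lemma dec1 (V : finType) (E M : {set {set V}}) v S1 S2 p :
  simple_graph E -> sep E v S1 S2 -> matching E M -> [set v; p] \in M ->
  #|M| = #|side M S1| + #|side M S2| + 1.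
Proof.
move=> sE sp mM vpM; have [H1 H2] := dec_sides sE sp mM.
rewrite -{1}H1 -H2.
have -> : [set e in M | v \in e] = [set [set v; p]].
  apply/setP => e; rewrite !inE; apply/idP/idP => [/andP [eM ve]|/eqP ->].
    by apply/eqP; apply: (match_uniq mM eM vpM ve); rewrite set21.
  by rewrite vpM set21.
rewrite cardsU1 addnC; congr (_ + _).
suff -> : ([set v; p] \notin side M S1 :|: side M S2) = true by [].
apply/negP; rewrite !inE => /orP [] /andP [_ /subsetP /(_ v (set21 _ _))].
  by have [h1 _ _ _ _] := sp; rewrite (negbTE h1).
by have [_ h2 _ _ _] := sp; rewrite (negbTE h2).
Qed.
Definition combo (V : finType) (X Y : {set {set V}}) (v p : V) := [set v; p] |: (X :|: Y).

Lemma combo_cover (V : finType) (X Y : {set {set V}}) v p z :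
  z \in cover (combo X Y v p) = [|| z \in [set v; p], z \in cover X | z \in cover Y].
Proof. by rewrite /combo cover_add cover_U. Qed.

Lemma combo_ok (V : finType) (E X Y : {set {set V}}) v S1 S2 p :
  simple_graph E -> sep E v S1 S2 -> matching E X -> matching E Y ->
  (forall e, e \in X -> e \subset S1) -> (forall e, e \in Y -> e \subset S2) ->
  [set v; p] \in E -> p \notin cover X -> p \notin cover Y ->
  matching E (combo X Y v p) /\ #|combo X Y v p| = #|X| + #|Y| + 1.
Proof.
move=> sE [h1 h2 h3 h4 h5] mX mY X1 Y2 vpE pX pY.
have cX : forall z, z \in cover X -> z \in S1.
  by move=> z /coverP [e /X1 /subsetP H /H].
have cY : forall z, z \in cover Y -> z \in S2.
  by move=> z /coverP [e /Y2 /subsetP H /H].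
have mXY : matching E (X :|: Y).
  split.
    apply/subsetP => e /setUP [eX|eY].
      by case: mX => /subsetP H _; apply: H.
    by case: mY => /subsetP H _; apply: H.
  have dis : forall e f, e \in X -> f \in Y -> [disjoint e & f].
    move=> e f eX fY; apply/disjP => z ze zf.
    by apply: (h3 z); [move/subsetP: (X1 _ eX); apply | move/subsetP: (Y2 _ fY); apply].
  move=> e f /setUP [eX|eY] /setUP [fX|fY] ef.
  - by case: mX => _; apply.
  - exact: dis.
  - by rewrite disjoint_sym; apply: dis.
  - by case: mY => _; apply.
have fd : forall z, z \in [set v; p] -> z \notin cover (X :|: Y).
  move=> z /set2P [->|->]; rewrite cover_U negb_or; last by rewrite pX pY.
  apply/andP; split; apply/negP; [move/cX | move/cY]; by [rewrite (negbTE h1) | rewrite (negbTE h2)].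
split; first by apply: matching_add.
rewrite /combo (card_add (z:=v)) ?set21 // card_disjU ?addn1 //.
move=> e eX eY; have := X1 _ eX; have := Y2 _ eY.
have eE : e \in E by case: mX => /subsetP H _; apply: H.
have [a [b [_ ee]]] := edge2 sE eE.
move=> /subsetP /(_ a) H2 /subsetP /(_ a) H1.
by apply: (h3 a); [apply: H1 | apply: H2]; rewrite ee set21.
Qed.

Lemma combo_max (V : finType) (E X Y : {set {set V}}) v S1 S2 p :
  simple_graph E -> sep E v S1 S2 -> matching E (combo X Y v p) ->
  (forall f, f \in E -> f \subset S1 -> exists2 z, z \in f & (z \in cover X) || (z == p)) ->
  (forall f, f \in E -> f \subset S2 -> exists2 z, z \in f & (z \in cover Y) || (z == p)) ->
  maximal_matching E (combo X Y v p).
Proof.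
move=> sE sp mZ H1 H2; apply/(maxP _ sE); split => // f fE.
case: (classify sE sp fE) => [vf|[f1|f2]].
- by exists v => //; rewrite combo_cover set21.
- have [z zf /orP [zX|/eqP zp]] := H1 f fE f1; exists z => //; rewrite combo_cover ?zX ?orbT //.
  by rewrite zp set22.
- have [z zf /orP [zY|/eqP zp]] := H2 f fE f2; exists z => //; rewrite combo_cover ?zY ?orbT //.
  by rewrite zp set22.
Qed.

Lemma sideH0 (V : finType) (E M : {set {set V}}) v S1 S2 f :
  simple_graph E -> sep E v S1 S2 -> maximal_matching E M -> v \notin cover M ->
  f \in E -> f \subset S1 -> exists2 z, z \in f & z \in cover (side M S1).
Proof.
move=> sE sp Mm vM fE f1.
have [mM H] := iffLR (maxP _ sE) Mm.
have [z zf zM] := H f fE.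
exists z => //.
have [e eM ze] := iffLR (coverP _ _) zM.
have eE : e \in E by case: mM => /subsetP H2 _; apply: H2.
have [h1 h2 h3 h4 h5] := sp.
have z1 : z \in S1 by move/subsetP: f1; apply.
case: (classify sE sp eE) => [ve|[e1|e2]].
- by move: vM; rewrite (cover_sub eM ve).
- by apply: (cover_sub _ ze); rewrite inE eM e1.
- by case: (h3 z z1); move/subsetP: e2; apply.
Qed.

Lemma sideH1 (V : finType) (E M : {set {set V}}) v S1 S2 p f :
  simple_graph E -> sep E v S1 S2 -> maximal_matching E M -> [set v; p] \in M ->
  f \in E -> f \subset S1 -> exists2 z, z \in f & (z \in cover (side M S1)) || (z == p).
Proof.
move=> sE sp Mm vpM fE f1.
have [mM H] := iffLR (maxP _ sE) Mm.
have [z zf zM] := H f fE.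
exists z => //.
have z1 : z \in S1 by move/subsetP: f1; apply.
by case: (sideC1 sE sp mM vpM zM z1) => [->|->]; rewrite ?eqxx ?orbT.
Qed.

Lemma arith1 (a b c d e f g : nat) :
  a = c + d + 1 -> b = e + f -> a = b -> e + d + 1 = b -> g = c + f + 1 -> g <= b -> False.
Proof. lia. Qed.

Lemma T2gen (V : finType) (E M0 M : {set {set V}}) v S1 S2 x w' :
  simple_graph E -> equimatchable E -> sep E v S1 S2 ->
  maximal_matching E M0 -> v \notin cover M0 ->
  maximal_matching E M -> x \in S1 -> [set v; x] \in E -> x \notin cover M ->
  w' \in S2 -> [set v; w'] \in M -> False.
Proof.
move=> sE eq sp M0m vM0 Mm x1 vxE xM w2 vwM.
have mM : matching E M by case: Mm.
have mM0 : matching E M0 by case: M0m.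
have sp' := sep_sym sp.
have [h1 h2 h3 h4 h5] := sp.
have vwE : [set v; w'] \in E by case: mM => /subsetP H _; apply: H.
have hM := dec1 sE sp mM vwM.
have hM0 := dec0 sE sp mM0 vM0.
have hMM0 := eq _ _ M0m Mm.
have ms : forall N S, matching E N -> matching E (side N S).
  by move=> N S mN; apply: (matching_sub mN); apply: side_sub.
have [mZ5 cZ5] := combo_ok sE sp (ms M0 S1 mM0) (ms M S2 mM) (@side_in _ _ _) (@side_in _ _ _) vwE
  (introN idP (fun H => h3 _ (cover_side H) w2)) (notin_side sE sp' mM vwM).
have Z5m : maximal_matching E (combo (side M0 S1) (side M S2) v w').
  apply: (combo_max sE sp mZ5).
    by move=> f fE f1; have [z zf zc] := sideH0 sE sp M0m vM0 fE f1; exists z; rewrite ?zc.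
  by move=> f fE f2; apply: (sideH1 sE sp' Mm vwM fE f2).
have e5 := eq _ _ M0m Z5m.
have [mZ6 cZ6] := combo_ok sE sp (ms M S1 mM) (ms M0 S2 mM0) (@side_in _ _ _) (@side_in _ _ _) vxE
  (introN idP (fun H => (negP xM) (cover_mono (side_sub M S1) H)))
  (introN idP (fun H => h3 _ x1 (cover_side H))).
have b6 := size_bound eq M0m mZ6.
exact: (arith1 hM hM0 (esym hMM0) (esym (etrans e5 cZ5)) cZ6 b6).
Qed.
Lemma notA (V : finType) (E : {set {set V}}) z :
  ~ covered_always E z -> exists2 M, maximal_matching E M & z \notin cover M.
Proof.
move=> nA; apply: NNPP => H; apply: nA => M Mm; apply/negPn/negP => zM; apply: H; by exists M.
Qed.

Lemma notin_combo (V : finType) (X Y : {set {set V}}) v p z :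
  z != v -> z != p -> z \notin cover X -> z \notin cover Y -> z \notin cover (combo X Y v p).
Proof.
by move=> zv zp zX zY; rewrite combo_cover in_set2 (negbTE zv) (negbTE zp) (negbTE zX) (negbTE zY).
Qed.

Lemma in_combo_v (V : finType) (X Y : {set {set V}}) v p : v \in cover (combo X Y v p).
Proof. by rewrite combo_cover set21. Qed.

Lemma nside (V : finType) (N : {set {set V}}) (S1 S2 : {set V}) z :
  (forall z, z \in S1 -> z \in S2 -> False) -> z \in S1 -> z \notin cover (side N S2).
Proof. by move=> h3 z1; apply/negP => /cover_side; apply: h3. Qed.

Lemma nside' (V : finType) (N : {set {set V}}) (S1 S2 : {set V}) z :
  (forall z, z \in S1 -> z \in S2 -> False) -> z \in S2 -> z \notin cover (side N S1).
Proof. by move=> h3 z2; apply/negP => /cover_side z1; apply: (h3 z). Qed.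

Lemma arith2 (m0 a c d e z : nat) :
  a + c + 1 = m0 -> d + e + 1 = m0 -> m0 = d + c -> z = a + e + 1 -> (z = m0 -> False) /\ z.+1 = m0.
Proof. lia. Qed.

Lemma cutA (V : finType) (E : {set {set V}}) v S1 S2 x w :
  simple_graph E -> edge_stable E -> adjH E -> sep E v S1 S2 ->
  x \in S1 -> [set v; x] \in E -> w \in S2 -> [set v; w] \in E ->
  exists t, covered_always E t.
Proof.
move=> sE es aH sp x1 vxE w2 vwE.
have eq := es.1.
have sp' := sep_sym sp.
have [h1 h2 h3 h4 h5] := sp.
case: (classic (covered_always E v)) => [Av|/notA [M0 M0m vM0]]; first by exists v.
case: (classic (covered_always E x)) => [Ax|/notA [M Mm xM]]; first by exists x.
case: (classic (covered_always E w)) => [Aw|/notA [M' M'm wM']]; first by exists w.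
exfalso.
have partner : forall N y, maximal_matching E N -> [set v; y] \in E -> y \notin cover N ->
    exists p, [set v; p] \in N /\ p != v.
  move=> N y Nm vyE yN.
  have vN : v \in cover N by apply/negPn/negP => vN; apply: (max_pair sE Nm vyE).
  have [e eN ve] := iffLR (coverP _ _) vN.
  have eE : e \in E by case: Nm => [[/subsetP H _] _]; apply: H.
  have [p pv ee] := edge_other sE eE ve.
  by exists p; rewrite -ee.
have mM : matching E M by case: Mm.
have mM0 : matching E M0 by case: M0m.
have mM' : matching E M' by case: M'm.
have [x' [vx'M x'v]] := partner M x Mm vxE xM.
have x'1 : x' \in S1.
  case/orP: (h4 _ x'v) => // x'2.
  by case: (T2gen sE eq sp M0m vM0 Mm x1 vxE xM x'2 vx'M).
have [w' [vw'M' w'v]] := partner M' w M'm vwE wM'.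
have w'2 : w' \in S2.
  case/orP: (h4 _ w'v) => // w'1.
  by case: (T2gen sE eq sp' M0m vM0 M'm w2 vwE wM' w'1 vw'M').
have ms : forall N S, matching E N -> matching E (side N S).
  by move=> N S mN; apply: (matching_sub mN); apply: side_sub.
have xs1 : x \notin cover (side M S1).
  by apply/negP => H; move: xM; rewrite (cover_mono (side_sub M S1) H).
have [mN cN] := combo_ok sE sp (ms M S1 mM) (ms M S2 mM) (@side_in _ _ _) (@side_in _ _ _) vxE
  xs1 (nside _ h3 x1).
have Nm : maximal_matching E (combo (side M S1) (side M S2) v x).
  by apply: (size_max eq Mm mN); rewrite cN (dec1 sE sp mM vx'M).
have x'x : x' != x.
  by apply/eqP => e; move: xM; rewrite -e (cover_sub vx'M (set22 _ _)).
have x's1 : x' \notin cover (side M S1) := notin_side sE sp mM vx'M.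
have x'N : x' \notin cover (combo (side M S1) (side M S2) v x).
  by apply: notin_combo => //; apply: (nside _ h3 x'1).
have vx'E : [set v; x'] \in E by case: mM => /subsetP H _; apply: H.
have [mZ1 cZ1] := combo_ok sE sp (ms M S1 mM) (ms M0 S2 mM0) (@side_in _ _ _) (@side_in _ _ _) vx'E
  x's1 (nside _ h3 x'1).
have Z1m : maximal_matching E (combo (side M S1) (side M0 S2) v x').
  apply: (combo_max sE sp mZ1).
    by move=> f fE f1; apply: (sideH1 sE sp Mm vx'M fE f1).
  by move=> f fE f2; have [z zf zc] := sideH0 sE sp' M0m vM0 fE f2; exists z; rewrite ?zc.
have e1 := eq _ _ M0m Z1m.
have vw'E : [set v; w'] \in E by case: mM' => /subsetP H _; apply: H.
have w's2 : w' \notin cover (side M' S2) := notin_side sE sp' mM' vw'M'.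
have [mZ2 cZ2] := combo_ok sE sp (ms M0 S1 mM0) (ms M' S2 mM') (@side_in _ _ _) (@side_in _ _ _) vw'E
  (nside' _ h3 w'2) w's2.
have Z2m : maximal_matching E (combo (side M0 S1) (side M' S2) v w').
  apply: (combo_max sE sp mZ2).
    by move=> f fE f1; have [z zf zc] := sideH0 sE sp M0m vM0 fE f1; exists z; rewrite ?zc.
  by move=> f fE f2; apply: (sideH1 sE sp' M'm vw'M' fE f2).
have e2 := eq _ _ M0m Z2m.
have hM0 := dec0 sE sp mM0 vM0.
set Z3 := combo (side M S1) (side M' S2) v w'.
have [mZ3 cZ3] := combo_ok sE sp (ms M S1 mM) (ms M' S2 mM') (@side_in _ _ _) (@side_in _ _ _) vw'E
  (nside' _ h3 w'2) w's2.
have [ar1 ar2] := arith2 (esym (etrans e1 cZ1)) (esym (etrans e2 cZ2)) hM0 cZ3.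
have nZ3 : ~ maximal_matching E Z3 by move=> Z3m; apply: ar1; rewrite (eq _ _ M0m Z3m).
have [f fE fd] := not_max_ex sE mZ3 nZ3.
case: (classify sE sp fE) => [vf|[f1|f2]].
- by move: (fd v vf); rewrite in_combo_v.
- have [z zf zc] := sideH1 sE sp Mm vx'M fE f1.
  have zZ3 := fd z zf.
  have zx' : z = x'.
    case/orP: zc => [zc|/eqP //]; move: zZ3; by rewrite combo_cover zc orbT.
  subst z.
  have [q qx' fq] := edge_other sE fE zf.
  have qZ3 : q \notin cover Z3 by apply: fd; rewrite fq set22.
  have q1 : q \in S1 by move/subsetP: f1; apply; rewrite fq set22.
  have qs1 : q \notin cover (side M S1).
    by move: qZ3; rewrite /Z3 combo_cover !negb_or => /and3P [].
  have qv : q != v by apply/eqP => qv; move: h1; rewrite -qv q1.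
  case: (eqVneq q x) => [qx|qnx]; last first.
    apply: (max_pair sE Nm (a:=x') (b:=q)) => //; first by rewrite -fq.
    by apply: notin_combo => //; apply: (nside _ h3 q1).
  subst q.
  have mZ4 : matching E (f |: Z3) by apply: matching_add.
  have Z4m : maximal_matching E (f |: Z3).
    by apply: (size_max eq M0m mZ4); rewrite (card_add (z:=x')) // ar2.
  have [z [u [zf' uZ4 zuE]]] := star sE es aH Z4m (setU11 f Z3).
  move: uZ4; rewrite cover_add negb_or => /andP [uf uZ3].
  have uv : u != v by apply/eqP => uv; move: uZ3; rewrite uv /Z3 in_combo_v.
  have z1 : z \in S1 by move/subsetP: f1; apply.
  have u1 : u \in S1.
    case/orP: (h4 _ uv) => // u2.
    by move: (h5 _ _ z1 u2); rewrite zuE.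
  have us1 : u \notin cover (side M S1).
    by move: uZ3; rewrite /Z3 combo_cover !negb_or => /and3P [].
  have ux' : u != x' by apply/eqP => e; move: uf; rewrite fq e set21.
  have ux : u != x by apply/eqP => e; move: uf; rewrite fq e set22.
  move: zf'; rewrite fq => /set2P [zz|zz]; rewrite zz in zuE.
    apply: (max_pair sE Nm zuE) => //.
    by apply: notin_combo => //; apply: (nside _ h3 u1).
  apply: (max_pair sE Mm zuE) => //.
  apply/negP => uM; case: (sideC1 sE sp mM vx'M uM u1) => [H|H].
    by rewrite H in us1.
  by rewrite H eqxx in ux'.
- have [z zf zc] := sideH1 sE sp' M'm vw'M' fE f2.
  move: (fd z zf); rewrite /Z3 combo_cover.
  case/orP: zc => [->|/eqP ->]; by rewrite ?orbT ?set22.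
Qed.
Lemma adjH_of (V : finType) (E : {set {set V}}) (v a b : V) :
  simple_graph E -> connected_graph E -> a != v -> b != v -> a != b -> adjH E.
Proof.
move=> sE conn av bv ab e eE.
have [p [q [pq ee]]] := edge2 sE eE.
have [z ze] : exists z, z \notin e.
  case: (boolP (v \in e)) => hv; last by exists v.
  case: (boolP (a \in e)) => ha; last by exists a.
  case: (boolP (b \in e)) => hb; last by exists b.
  exfalso; move: hv ha hb av bv ab; rewrite ee.
  by case/set2P => ->; case/set2P => ->; case/set2P => ->; rewrite ?eqxx.
have pe : p \in e by rewrite ee set21.
have [p' [q' [p'e q'e r]]] := exit_lemma (P := fun y => y \in e) (conn p z (in_setT _) (in_setT _)) pe ze.
move/and4P: r => [_ _ _ gE].
exists [set p'; q']; split => //.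
  by apply/eqP => ge; move: q'e; rewrite -ge set22.
by exists p' => //; rewrite set21.
Qed.

Theorem theorem4p1 (V : finType) (E : {set {set V}}) :
  simple_graph E -> connected_graph E -> edge_stable E ->
  (exists v : V, cut_vertex E v) -> bipartite E.
Proof.
move=> sE conn es [v cv].
pose r := adj_in E (setT :\ v).
have [a [b [aS [bS nab]]]] : exists a b, [/\ a \in setT :\ v, b \in setT :\ v & ~ connect r a b].
  apply: NNPP => H; apply: cv => a b aS bS; apply: NNPP => nc; apply: H; by exists a, b.
have av : a != v by move: aS => /setD1P [].
have bv : b != v by move: bS => /setD1P [].
have ab : a != b by apply/eqP => e; apply: nab; rewrite e connect0.
pose S1 := [set z | (z != v) && connect r a z].
pose S2 := [set z | (z != v) && ~~ connect r a z].
have h5 : forall p q, p \in S1 -> q \in S2 -> [set p; q] \notin E.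
  move=> p q; rewrite !inE => /andP [pv cp] /andP [qv ncq]; apply/negP => pqE.
  move/negP: ncq; apply; apply: (connect_trans cp); apply: connect1.
  by rewrite /r /adj_in !inE pv qv (edge_neq sE pqE) pqE.
have sp : sep E v S1 S2.
  split => //.
  - by rewrite inE eqxx.
  - by rewrite inE eqxx.
  - by move=> z; rewrite !inE => /andP [_ ->] /andP [].
  - by move=> z zv; rewrite !inE zv /=; case: (connect r a z).
have nv1 : v \notin S1 by rewrite inE eqxx.
have nv2 : v \notin S2 by rewrite inE eqxx.
have a1 : a \in S1 by rewrite inE av connect0.
have b2 : b \in S2 by rewrite inE bv; apply/negP.
have [x [x1 vxE]] : exists x, x \in S1 /\ [set v; x] \in E.
  have [p [q [p1 q1 /and4P [_ _ _ pqE]]]] :=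
    exit_lemma (P := fun y => y \in S1) (conn a v (in_setT _) (in_setT _)) a1 nv1.
  case: (eqVneq q v) => [qv|qv].
    by exists p; split => //; rewrite setUC -qv.
  have q2 : q \in S2 by move: q1; rewrite !inE qv.
  by move: (h5 _ _ p1 q2); rewrite pqE.
have [w [w2 vwE]] : exists w, w \in S2 /\ [set v; w] \in E.
  have [p [q [p2 q2 /and4P [_ _ _ pqE]]]] :=
    exit_lemma (P := fun y => y \in S2) (conn b v (in_setT _) (in_setT _)) b2 nv2.
  case: (eqVneq q v) => [qv|qv].
    by exists p; split => //; rewrite setUC -qv.
  have q1 : q \in S1.
    move: q2; rewrite !inE qv /= negbK; done.
  by move: (h5 _ _ q1 p2); rewrite setUC pqE.
have aH := adjH_of sE conn av bv ab.
have [t At] := cutA sE es aH sp x1 vxE w2 vwE.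
exact: (bip_from_A sE es aH conn At).
Qed.
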